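(* Let $r\ge1$, let $\mathcal{A}:\mathbb{C}^{m\times n}\to\mathbb{C}^p$ be linear with $\delta_{4r}(\mathcal{A})\le0.04$, let $X_0\in\mathbb{C}^{m\times n}$ with $\mathrm{rank}(X_0)\le r$, let $\nu\in\mathbb{C}^p$ and $b=\mathcal{A}X_0+\nu$. Let $\widehat{X}\in\mathbb{C}^{m\times n}$ with $\mathrm{rank}(\widehat{X})\le r$, and let $\Psi'$ be any maximizer of $\|\mathcal{P}_\Psi\mathcal{A}^*(b-\mathcal{A}\widehat{X})\|_F$ over $\Psi\subset\mathbb{O}$ with $|\Psi|\le2r$. Then $$\|\mathcal{P}_{\Psi'}^\perp(X_0-\widehat{X})\|_F\le0.24\|X_0-\widehat{X}\|_F+2.13\|\nu\|_2.$$
   Context: $\mathbb{C}^p$ has inner product $\langle x,y\rangle=y^Hx$ and norm $\|\cdot\|_2$; $\mathbb{C}^{m\times n}$ has inner product $\langle X,Y\rangle=\mathrm{tr}(Y^HX)$ and Frobenius norm $\|\cdot\|_F$; $\mathcal{A}^*$ is the adjoint of $\mathcal{A}$. $\delta_s(\mathcal{A})$ is the smallest $\delta\ge0$ such that $(1-\delta)\|X\|_F^2\le\|\mathcal{A}X\|_2^2\le(1+\delta)\|X\|_F^2$ for all $X$ with $\mathrm{rank}(X)\le s$. The set of atoms $\mathbb{O}$ is a set of unit-Frobenius-norm rank-one matrices such that every nonzero rank-one matrix is a scalar multiple of exactly one element of $\mathbb{O}$. For $\Psi\subset\mathbb{O}$, $\mathcal{P}_\Psi$ is the orthogonal projection onto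 $\mathrm{span}(\Psi)$ and $\mathcal{P}_\Psi^\perp=I-\mathcal{P}_\Psi$. (In the paper, $\widehat{X}$ is the previous ADMiRA estimate, which has rank at most $r$.) *)

(* Defs.v *)
From HB Require Import structures.
From mathcomp Require Import all_boot all_order all_algebra.
From mathcomp Require Import complex.
From mathcomp Require Import reals.
From Stdlib Require Import ClassicalEpsilon.
Set Implicit Arguments. Unset Strict Implicit. Unset Printing Implicit Defensive.
Import Order.TTheory GRing.Theory Num.Theory.
Local Open Scope ring_scope.

Section Defs.
Variable C : numClosedFieldType.

Definition vdot p (x y : 'cV[C]_p) : C := \sum_(k < p) x k 0 * (y k 0)^*.
Definition mdot m n (X Y : 'M[C]_(m, n)) : C := \tr ((map_mx Num.conj Y)^T *m X).
Definition vnorm p (x : 'cV[C]_p) : C := sqrtC (vdot x x).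
Definition fnorm m n (X : 'M[C]_(m, n)) : C := sqrtC (mdot X X).

Definition is_adjoint m n p (A : 'M[C]_(m, n) -> 'cV[C]_p)
  (Astar : 'cV[C]_p -> 'M[C]_(m, n)) : Prop :=
  forall X y, vdot (A X) y = mdot X (Astar y).

Definition rip_bound m n p (A : 'M[C]_(m, n) -> 'cV[C]_p) (s : nat) (d : C) : Prop :=
  forall X : 'M[C]_(m, n), (\rank X <= s)%N ->
    (1 - d) * fnorm X ^+ 2 <= vnorm (A X) ^+ 2 <= (1 + d) * fnorm X ^+ 2.

(* delta_s(A) = smallest d >= 0 with rip_bound; "delta_s(A) <= c" *)
Definition ric_le m n p (A : 'M[C]_(m, n) -> 'cV[C]_p) (s : nat) (c : C) : Prop :=
  exists d, [/\ 0 <= d, d <= c, rip_bound A s d &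
     forall d', 0 <= d' -> rip_bound A s d' -> d <= d'].

Definition atoms m n (O : 'M[C]_(m, n) -> Prop) : Prop :=
  (forall W, O W -> \rank W = 1%N /\ fnorm W = 1) /\
  (forall X : 'M[C]_(m, n), \rank X = 1%N ->
     exists! W, O W /\ exists c : C, X = c *: W).

Definition is_orth_proj m n (U : {vspace 'M[C]_(m, n)}) (Z Y : 'M[C]_(m, n)) : Prop :=
  Y \in U /\ forall W, W \in U -> mdot (Z - Y) W = 0.

Definition proj m n (U : {vspace 'M[C]_(m, n)}) (Z : 'M[C]_(m, n)) : 'M[C]_(m, n) :=
  epsilon (inhabits 0) (is_orth_proj U Z).

(* P_Psi and P_Psi^perp for a finite Psi given as a duplicate-free list *)
Definition P_ m n (Psi : seq 'M[C]_(m, n)) (Z : 'M[C]_(m, n)) := proj <<Psi>>%VS Z.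
Definition Pperp m n (Psi : seq 'M[C]_(m, n)) (Z : 'M[C]_(m, n)) := Z - P_ Psi Z.

Definition admissible m n (O : 'M[C]_(m, n) -> Prop) (k : nat) (Psi : seq 'M[C]_(m, n)) :=
  [/\ uniq Psi, (forall W, W \in Psi -> O W) & (size Psi <= k)%N].

End Defs.

(* Main.v *)
Require Import Defs.
From HB Require Import structures.
From mathcomp Require Import all_boot all_order all_algebra.
From mathcomp Require Import complex.
From mathcomp Require Import reals.
From mathcomp Require Import ring lra.
From Stdlib Require Import ClassicalEpsilon.
Import Order.TTheory GRing.Theory Num.Theory.
Local Open Scope ring_scope.

Section S.
Context {R : realType}.
Local Notation C := R[i].

Section Mat.
Context {m n : nat}.
Implicit Types X Y Z : 'M[C]_(m, n).

Lemma mdotE X Y : mdot X Y = \sum_(k < n) \sum_(i < m) X i k * (Y i k)^*.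
Proof.
rewrite /mdot /mxtrace; apply: eq_bigr => k _; rewrite !mxE.
by apply: eq_bigr => i _; rewrite !mxE mulrC.
Qed.

Lemma mdotDl X Y Z : mdot (X + Y) Z = mdot X Z + mdot Y Z.
Proof.
rewrite !mdotE -big_split; apply: eq_bigr => k _; rewrite -big_split.
by apply: eq_bigr => i _; rewrite mxE mulrDl.
Qed.

Lemma mdotZl a X Z : mdot (a *: X) Z = a * mdot X Z.
Proof.
rewrite !mdotE mulr_sumr; apply: eq_bigr => k _; rewrite mulr_sumr.
by apply: eq_bigr => i _; rewrite mxE mulrA.
Qed.

Lemma mdotC X Y : mdot Y X = (mdot X Y)^*.
Proof.
rewrite !mdotE rmorph_sum; apply: eq_bigr => k _; rewrite rmorph_sum.
by apply: eq_bigr => i _; rewrite rmorphM /= conjCK mulrC.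
Qed.

Lemma mdotNl X Z : mdot (- X) Z = - mdot X Z.
Proof. by rewrite -scaleN1r mdotZl mulN1r. Qed.

Lemma mdotBl X Y Z : mdot (X - Y) Z = mdot X Z - mdot Y Z.
Proof. by rewrite mdotDl mdotNl. Qed.

Lemma mdot0l Z : mdot 0 Z = 0.
Proof. by rewrite -(scale0r 0) mdotZl mul0r. Qed.

Lemma mdotDr X Y Z : mdot Z (X + Y) = mdot Z X + mdot Z Y.
Proof. by rewrite mdotC mdotDl rmorphD /= -!mdotC. Qed.

Lemma mdotZr a X Z : mdot Z (a *: X) = a^* * mdot Z X.
Proof. by rewrite mdotC mdotZl rmorphM /= -mdotC. Qed.

Lemma mdotNr X Z : mdot Z (- X) = - mdot Z X.
Proof. by rewrite mdotC mdotNl rmorphN /= -mdotC. Qed.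

Lemma mdotBr X Y Z : mdot Z (X - Y) = mdot Z X - mdot Z Y.
Proof. by rewrite mdotDr mdotNr. Qed.

Lemma mdot0r Z : mdot Z 0 = 0.
Proof. by rewrite mdotC mdot0l rmorph0. Qed.

Lemma mdot_ge0 X : 0 <= mdot X X.
Proof.
rewrite mdotE; apply: sumr_ge0 => k _; apply: sumr_ge0 => i _.
exact: mul_conjC_ge0.
Qed.

Lemma mdot_eq0 X : mdot X X = 0 -> X = 0.
Proof.
rewrite mdotE => /psumr_eq0P H.
have H1 : forall k, \sum_(i < m) X i k * (X i k)^* = 0.
  by move=> k; apply: H => // k' _; apply: sumr_ge0 => i _; exact: mul_conjC_ge0.
apply/matrixP => i k; rewrite mxE.
have /psumr_eq0P H2 := H1 k.
have /eqP := H2 (fun j _ => mul_conjC_ge0 _) i isT.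
by rewrite mul_conjC_eq0 => /eqP.
Qed.

End Mat.

Lemma ReD (x y : C) : complex.Re (x + y) = complex.Re x + complex.Re y. Proof. by case: x => ? ?; case: y => ? ?; reflexivity. Qed.
Lemma ReN (x : C) : complex.Re (- x) = - complex.Re x. Proof. by case: x => ? ?; reflexivity. Qed.
Lemma ReRM (a : R) (x : C) : complex.Re (a%:C%C * x) = a * complex.Re x.
Proof. by case: x => u v /=; rewrite mul0r subr0. Qed.
Lemma ReJ (x : C) : complex.Re (x^*) = complex.Re x. Proof. by case: x => ? ?; reflexivity. Qed.
Lemma Re0 : complex.Re (0 : C) = 0. Proof. by []. Qed.
Lemma ge0_RE (x : C) : 0 <= x -> x = (complex.Re x)%:C%C.
Proof. by move=> h; rewrite RRe_real // ger0_real. Qed.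
Lemma Re_ge0 (x : C) : 0 <= x -> 0 <= complex.Re x.
Proof. by move=> h; move: (h); rewrite [x in 0 <= x -> _]ge0_RE // ler0c. Qed.
Lemma sqrtC_R (x : R) : 0 <= x -> sqrtC (x%:C%C) = (Num.sqrt x)%:C%C.
Proof.
move=> h; have -> : x%:C%C = ((Num.sqrt x)%:C%C)^+2 by rewrite -rmorphXn /= sqr_sqrtr.
by rewrite sqrCK // -[0]/(0%:C%C) lecR sqrtr_ge0.
Qed.

Section Real.
Context {m n : nat}.
Implicit Types X Y Z : 'M[C]_(m, n).
Definition ip X Y := complex.Re (mdot X Y).
Definition nr X := ip X X.

Lemma ipDl X Y Z : ip (X + Y) Z = ip X Z + ip Y Z.
Proof. by rewrite /ip mdotDl ReD. Qed.
Lemma ipNl X Z : ip (- X) Z = - ip X Z.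
Proof. by rewrite /ip mdotNl ReN. Qed.
Lemma ipBl X Y Z : ip (X - Y) Z = ip X Z - ip Y Z.
Proof. by rewrite ipDl ipNl. Qed.
Lemma ipC X Y : ip Y X = ip X Y.
Proof. by rewrite /ip mdotC ReJ. Qed.
Lemma ipDr X Y Z : ip Z (X + Y) = ip Z X + ip Z Y.
Proof. by rewrite ipC ipDl !(ipC Z). Qed.
Lemma ipNr X Z : ip Z (- X) = - ip Z X.
Proof. by rewrite ipC ipNl ipC. Qed.
Lemma ipBr X Y Z : ip Z (X - Y) = ip Z X - ip Z Y.
Proof. by rewrite ipDr ipNr. Qed.
Lemma ipZl (a : R) X Z : ip (a%:C%C *: X) Z = a * ip X Z.
Proof. by rewrite /ip mdotZl ReRM. Qed.
Lemma ipZr (a : R) X Z : ip Z (a%:C%C *: X) = a * ip Z X.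
Proof. by rewrite ipC ipZl ipC. Qed.
Lemma ip0l Z : ip 0 Z = 0. Proof. by rewrite /ip mdot0l. Qed.
Lemma ip0r Z : ip Z 0 = 0. Proof. by rewrite /ip mdot0r. Qed.
Lemma nr_ge0 X : 0 <= nr X. Proof. exact/Re_ge0/mdot_ge0. Qed.
Lemma mdot_nr X : mdot X X = (nr X)%:C%C. Proof. exact/ge0_RE/mdot_ge0. Qed.
Lemma nr_eq0 X : nr X = 0 -> X = 0.
Proof. by move=> h; apply: mdot_eq0; rewrite mdot_nr h. Qed.
Lemma fnormE X : fnorm X = (Num.sqrt (nr X))%:C%C.
Proof. by rewrite /fnorm mdot_nr sqrtC_R // nr_ge0. Qed.
Lemma fnorm_sqr X : fnorm X ^+ 2 = (nr X)%:C%C.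
Proof. by rewrite /fnorm sqrtCK mdot_nr. Qed.
Lemma nrD X Y : nr (X + Y) = nr X + nr Y + 2 * ip X Y.
Proof. rewrite /nr ipDl !ipDr (ipC X Y); ring. Qed.
Lemma nrB X Y : nr (X - Y) = nr X + nr Y - 2 * ip X Y.
Proof. rewrite /nr ipBl !ipBr (ipC X Y); ring. Qed.
Lemma nrN X : nr (- X) = nr X.
Proof. by rewrite /nr ipNl ipNr opprK. Qed.
Lemma nrZ (a : R) X : nr (a%:C%C *: X) = a ^+ 2 * nr X.
Proof. rewrite /nr ipZl ipZr; ring. Qed.
Lemma orth_ip {X Y} : mdot X Y = 0 -> ip X Y = 0.
Proof. by rewrite /ip => ->. Qed.

Lemma CS X Y : ip X Y ^+ 2 <= nr X * nr Y.
Proof.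
have [h0|hp] := eqVneq (nr Y) 0.
  by rewrite (nr_eq0 _ h0) ip0r /nr ip0r expr0n /= mulr0.
have nY := nr_ge0 Y; have nYp : 0 < nr Y by rewrite lt_def hp.
pose t := ip X Y / nr Y.
have ht : t * nr Y = ip X Y by rewrite /t divfK.
have := nr_ge0 (X - t%:C%C *: Y).
rewrite nrB nrZ ipZr => h.
nra.
Qed.
End Real.

Lemma vdot_mdot p (x y : 'cV[C]_p) : vdot x y = mdot x y.
Proof. by rewrite mdotE big_ord1 /vdot. Qed.

Section Span.
Context {m n : nat}.
Implicit Types X Y Z W : 'M[C]_(m, n).

Lemma mdot_sumr Z k (F : 'I_k -> 'M[C]_(m, n)) :
  mdot Z (\sum_(i < k) F i) = \sum_(i < k) mdot Z (F i).
Proof.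
by rewrite (big_morph (mdot Z) (fun x y => mdotDr x y Z) (mdot0r Z)).
Qed.

Lemma span_coefs (s : seq 'M[C]_(m, n)) W : W \in <<s>>%VS ->
  exists f : nat -> C, W = \sum_(i < size s) f i *: s`_i.
Proof.
elim: s W => [|x s IH] W.
  by rewrite span_nil memv0 => /eqP ->; exists (fun _ => 0); rewrite big_ord0.
rewrite span_cons => /memv_addP [y /vlineP [k ->] [z /IH [f ->] ->]].
exists (fun i => if i is i'.+1 then f i' else k).
by rewrite big_ord_recl /=.
Qed.

Lemma orth_span (s : seq 'M[C]_(m, n)) Z :
  (forall w, w \in s -> mdot Z w = 0) ->
  forall W, W \in <<s>>%VS -> mdot Z W = 0.
Proof.
move=> H W /span_coefs [f ->]; rewrite mdot_sumr big1 // => i _.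
by rewrite mdotZr H ?mulr0 // mem_nth.
Qed.

Lemma rank_sum k (F : 'I_k -> 'M[C]_(m, n)) :
  (forall i, (mxrank (F i) <= 1)%N) -> (mxrank (\sum_(i < k) F i)%R <= k)%N.
Proof.
elim: k F => [|k IH] F H; first by rewrite big_ord0 mxrank0.
rewrite big_ord_recr /=; apply: leq_trans (mxrank_add _ _) _.
have := leq_add (IH (fun i => F (widen_ord (leqnSn k) i)) (fun i => H _)) (H ord_max).
by rewrite addn1.
Qed.

Lemma rank_span (s : seq 'M[C]_(m, n)) W :
  (forall w, w \in s -> \rank w = 1%N) -> W \in <<s>>%VS ->
  ((\rank W) <= size s)%N.
Proof.
move=> H /span_coefs [f ->]; apply: rank_sum => i.
by apply: leq_trans (mxrank_scale _ _) _; rewrite H // mem_nth.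
Qed.

Lemma proj_ex (s : seq 'M[C]_(m, n)) Z :
  exists Y, Y \in <<s>>%VS /\ forall W, W \in <<s>>%VS -> mdot (Z - Y) W = 0.
Proof.
elim: s Z => [|x s IH] Z.
  exists 0; split; first exact: mem0v.
  by move=> W; rewrite span_nil memv0 => /eqP ->; rewrite mdot0r.
have [Y' [Y'in Y'o]] := IH Z.
have [Yx [Yxin Yxo]] := IH x.
have sub : (<<s>> <= <<x :: s>>)%VS by apply: sub_span => w w_in; rewrite inE w_in orbT.
set x' := x - Yx.
have x'in : x' \in <<x :: s>>%VS.
  by apply: memvB; [apply: memv_span; rewrite inE eqxx | apply: (subvP sub)].
have [h0|hn] := eqVneq (mdot x' x') 0.
  have xx : x = Yx by apply/eqP; rewrite -subr_eq0; apply/eqP/mdot_eq0.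
  exists Y'; split; first exact: (subvP sub).
  move=> W; rewrite span_cons => /memv_addP [y /vlineP [k ->] [z zin ->]].
  by rewrite mdotDr mdotZr xx Y'o // Y'o // mulr0 add0r.
pose c := mdot (Z - Y') x' / mdot x' x'.
have G : forall w, w \in <<s>>%VS -> mdot (Z - (Y' + c *: x')) w = 0.
  move=> w win; rewrite opprD addrA mdotBl Y'o // mdotZl /x' Yxo // mulr0.
  by rewrite subr0.
exists (Y' + c *: x'); split.
  by apply: memvD; [apply: (subvP sub) | apply: memvZ].
move=> W; rewrite span_cons => /memv_addP [y /vlineP [k ->] [z zin ->]].
rewrite mdotDr (G z) // addr0 mdotZr.
have -> : x = x' + Yx by rewrite /x' subrK.
rewrite mdotDr (G Yx) // addr0 opprD addrA mdotBl mdotZl /c divfK // subrr.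
by rewrite mulr0.
Qed.

Lemma projP (s : seq 'M[C]_(m, n)) Z :
  P_ s Z \in <<s>>%VS /\ forall W, W \in <<s>>%VS -> mdot (Z - P_ s Z) W = 0.
Proof.
rewrite /P_ /proj; have [Y HY] := proj_ex s Z.
exact: (epsilon_spec (inhabits 0) (is_orth_proj <<s>>%VS Z) (ex_intro _ Y HY)).
Qed.

End Span.

Lemma mul_sum_colrow m k n (A : 'M[C]_(m, k)) (B : 'M[C]_(k, n)) :
  A *m B = (\sum_(i < k) col i A *m row i B)%R.
Proof.
apply/matrixP => a b; rewrite !mxE summxE; apply: eq_bigr => i _.
by rewrite !mxE big_ord1 !mxE.
Qed.

Lemma rank_decomp {m n} (X : 'M[C]_(m, n)) :
  exists F : 'I_(\rank X) -> 'M[C]_(m, n),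
    (forall i, (mxrank (F i) <= 1)%N) /\ X = (\sum_(i < \rank X) F i)%R.
Proof.
exists (fun i => col i (col_base X) *m row i (row_base X)); split.
  by move=> i; apply: leq_trans (mxrankM_maxl _ _) _; exact: rank_leq_col.
by rewrite -mul_sum_colrow mulmx_base.
Qed.

Lemma atoms_decomp {m n} {O : 'M[C]_(m, n) -> Prop} : atoms O ->
  forall k (F : 'I_k -> 'M[C]_(m, n)), (forall i, (mxrank (F i) <= 1)%N) ->
  exists Psi, [/\ uniq Psi, (forall W, W \in Psi -> O W), (size Psi <= k)%N
     & (\sum_(i < k) F i)%R \in <<Psi>>%VS].
Proof.
move=> [hO1 hO2]; elim=> [|k IH] F H.
  by exists [::]; split => //; rewrite big_ord0 mem0v.
have [Psi [u o sz mem]] := IH (fun i => F (widen_ord (leqnSn k) i)) (fun i => H _).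
rewrite big_ord_recr /=.
have [F0|Fn] := eqVneq (F ord_max) 0.
  by exists Psi; split => //; [exact: leqW | rewrite F0 addr0].
have r1 : \rank (F ord_max) = 1%N.
  apply/eqP; rewrite eqn_leq H lt0n mxrank_eq0; exact: Fn.
have [W [[OW [c Fc]] _]] := hO2 _ r1.
have [Win|Wn] := boolP (W \in Psi).
  exists Psi; split => //; first exact: leqW.
  by rewrite Fc; apply: memvD => //; apply/memvZ/memv_span.
exists (W :: Psi); split => //.
- by rewrite cons_uniq Wn u.
- by move=> W'; rewrite inE => /orP [/eqP ->|/o].
apply: memvD.
  by apply: (subvP (sub_span _)) mem => w wi; rewrite inE wi orbT.
by rewrite Fc; apply/memvZ/memv_span; rewrite inE eqxx.
Qed.

Lemma one_C : (1 : C) = (1 : R)%:C%C. Proof. by rewrite rmorph1. Qed.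

Lemma ripR {m n p} (A : 'M[C]_(m, n) -> 'cV[C]_p) s (d : C) (dr : R) :
  d = dr%:C%C -> rip_bound A s d -> forall X, (mxrank X <= s)%N ->
  (1 - dr) * nr X <= nr (A X) /\ nr (A X) <= (1 + dr) * nr X.
Proof.
move=> -> H X hX; have /andP [h1 h2] := H X hX.
rewrite /vnorm sqrtCK vdot_mdot mdot_nr fnorm_sqr one_C in h1 h2.
rewrite -rmorphB -rmorphM lecR in h1.
by rewrite -rmorphD -rmorphM lecR in h2.
Qed.

Lemma sq_le (x y : R) : 0 <= y -> x ^+ 2 <= y ^+ 2 -> x <= y.
Proof. move=> hy hxy; case: (lerP x y) => // h; nra. Qed.

Lemma CSs {m n} (X Y : 'M[C]_(m, n)) : ip X Y <= Num.sqrt (nr X) * Num.sqrt (nr Y).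
Proof.
apply: sq_le; first by apply: mulr_ge0; exact: sqrtr_ge0.
by rewrite exprMn !sqr_sqrtr ?nr_ge0 //; exact: CS.
Qed.

Lemma nr_sqrt0 {m n} {X : 'M[C]_(m, n)} : Num.sqrt (nr X) = 0 -> X = 0.
Proof.
move=> /eqP; rewrite sqrtr_eq0 => h; apply: nr_eq0; apply/eqP.
by rewrite eq_le h nr_ge0.
Qed.

Section Pol.
Variables m n p : nat.
Variable A : {linear 'M[C]_(m, n) -> 'cV[C]_p}.
Variable U : {vspace 'M[C]_(m, n)}.
Variable dr : R.
Hypothesis dr0 : 0 <= dr.
Hypothesis H : forall X, X \in U ->
  (1 - dr) * nr X <= nr (A X) /\ nr (A X) <= (1 + dr) * nr X.

Lemma pol0 X W : X \in U -> W \in U ->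
  ip (A X) (A W) - ip X W <= dr * (nr X + nr W) / 2.
Proof.
move=> hX hW.
have [h1 _] := H _ (memvB hX hW); have [_ h2] := H _ (memvD hX hW).
rewrite linearB nrB nrB in h1; rewrite linearD nrD nrD in h2.
have := nr_ge0 X; have := nr_ge0 W; lra.
Qed.

Lemma pol X W : X \in U -> W \in U ->
  ip (A X) (A W) - ip X W <= dr * Num.sqrt (nr X) * Num.sqrt (nr W).
Proof.
move=> hX hW.
have hx := sqrtr_ge0 (nr X); have hw := sqrtr_ge0 (nr W).
have [x0|xn] := eqVneq (Num.sqrt (nr X)) 0.
  rewrite (nr_sqrt0 x0) linear0 !ip0l subrr.
  by rewrite !mulr_ge0 // sqrtr_ge0. Show.
have [w0|wn] := eqVneq (Num.sqrt (nr W)) 0.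
  rewrite (nr_sqrt0 w0) linear0 !ip0r subrr.
  by rewrite !mulr_ge0 // sqrtr_ge0.
set x := Num.sqrt (nr X) in hx xn *; set w := Num.sqrt (nr W) in hw wn *.
have := pol0 _ _ (memvZ (w%:C%C) hX) (memvZ (x%:C%C) hW).
rewrite !linearZ /= !ipZl !ipZr !nrZ.
rewrite -(sqr_sqrtr (nr_ge0 X)) -(sqr_sqrtr (nr_ge0 W)) -/x -/w => h.
have hxp : 0 < x by rewrite lt_def xn hx.
have hwp : 0 < w by rewrite lt_def wn hw.
have hwx : 0 < w * x by apply: mulr_gt0.
nra.
Qed.
End Pol.

Lemma orth_sub {m n} (s t : seq 'M[C]_(m, n)) Y W : (<<s>> <= <<t>>)%VS ->
  W \in <<s>>%VS -> ip (P_ t Y - P_ s Y) W = 0.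
Proof.
move=> h hW; have [_ ot] := projP t Y; have [_ os] := projP s Y.
have -> : P_ t Y - P_ s Y = (Y - P_ s Y) - (Y - P_ t Y).
  by rewrite [in RHS]opprB [in RHS]addrC [in RHS]addrA subrK.
by rewrite ipBl (orth_ip (os W hW)) (orth_ip (ot W (subvP h W hW))) subrr.
Qed.

Lemma sqrE {m n} (X : 'M[C]_(m, n)) : nr X = Num.sqrt (nr X) ^+ 2.
Proof. by rewrite sqr_sqrtr // nr_ge0. Qed.

Lemma cst_C (k : nat) : (k%:R / 100%:R : C) = (k%:R / 100%:R : R)%:C%C.
Proof. by rewrite rmorphM /= rmorph_nat fmorphV /= rmorph_nat. Qed.
Lemma L1 (e y dr : R) : 0 <= dr -> dr <= 4%:R / 100%:R -> 0 <= e -> 0 <= y ->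
  y ^+ 2 <= (1 + dr) * e ^+ 2 -> y <= 102%:R / 100%:R * e.
Proof.
move=> d0 d1 he hy h; apply: sq_le; first lra.
have h2 : dr * e ^+ 2 <= 4%:R / 100%:R * e ^+ 2 by apply: ler_wpM2r => //; exact: sqr_ge0.
have h3 : (102%:R / 100%:R : R) ^+ 2 = 10404%:R / 10000%:R.
  by rewrite expr2; field.
have h4 : (1 + dr) * e ^+ 2 = e ^+ 2 + dr * e ^+ 2 by ring.
rewrite h4 in h; rewrite exprMn h3.
set E2 := e ^+ 2 in h h2 *; set DE := dr * E2 in h h2 *. have := sqr_ge0 e; rewrite -/E2 => ?; lra.
Qed.

Lemma L2 (e K : R) : 0 <= e -> 0 <= K -> e ^+ 2 <= e * K -> e <= K.
Proof. move=> he hK h; nra. Qed.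

Lemma final_arith (dr dd e v y z q nE nAE nZP1 nDQ a1 a2 a3 nZ nP1 nP0 nZP0 nPD nDP1 nQP1 c : R) :
 0 <= dr -> dr <= 4%:R / 100%:R -> 0 <= dd -> 0 <= e -> 0 <= v -> 0 <= y -> 0 <= z -> 0 <= q ->
 nE = e ^+ 2 -> nAE = y ^+ 2 -> nZP1 = z ^+ 2 -> nDQ = q ^+ 2 ->
 nE = a1 + a2 - a3 -> a1 - a3 <= dr * dd * e -> a2 <= y * v -> nAE <= (1 + dr) * nE ->
 nZ = nP1 + nZP1 -> nZ = nP0 + nZP0 -> nE = nZP0 + nPD -> 0 <= nPD ->
 nDP1 = nDQ + nQP1 -> 0 <= nQP1 -> nDP1 = nZP1 + nE - 2 * c -> - c <= z * e -> nP0 <= nP1 ->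
 q <= 24%:R / 100%:R * dd + 213%:R / 100%:R * v.
Proof.
move=> d0 d1 hdd he hv hy hz hq -> -> -> -> ha hb hc hd he1 hf hg hPD hh hQP hi hi2 hm.
have s1 := L1 _ _ _ d0 d1 he hy hd.
have s1' : y * v <= 102%:R / 100%:R * e * v by apply: ler_wpM2r.
have hK : 0 <= dr * dd + 102%:R / 100%:R * v by apply: addr_ge0; [apply: mulr_ge0|lra].
have s2 : e <= dr * dd + 102%:R / 100%:R * v.
  apply: L2 => //.
  have -> : e * (dr * dd + 102%:R / 100%:R * v) = dr * dd * e + 102%:R / 100%:R * e * v by ring.
  lra.
have s3 : z <= e by apply: sq_le => //; lra.
have s4 : q <= z + e.
  apply: sq_le; first lra.
  have -> : (z + e) ^+ 2 = z ^+ 2 + e ^+ 2 + 2 * (z * e) by ring.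
  lra.
have : dr * dd <= 4%:R / 100%:R * dd by apply: ler_wpM2r.
lra.
Qed.
End S.

Theorem lemma1 (R : realType) (m n p r : nat)
  (O : 'M[R[i]]_(m, n) -> Prop)
  (A : {linear 'M[R[i]]_(m, n) -> 'cV[R[i]]_p})
  (Astar : 'cV[R[i]]_p -> 'M[R[i]]_(m, n))
  (X0 Xh : 'M[R[i]]_(m, n)) (nu b : 'cV[R[i]]_p) (Psi' : seq 'M[R[i]]_(m, n)) :
  (1 <= r)%N ->
  atoms O ->
  is_adjoint A Astar ->
  ric_le A (4 * r) (4%:R / 100%:R) ->
  (\rank X0 <= r)%N ->
  b = A X0 + nu ->
  (\rank Xh <= r)%N ->
  admissible O (2 * r) Psi' ->
  (forall Psi, admissible O (2 * r) Psi ->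
     fnorm (P_ Psi (Astar (b - A Xh))) <= fnorm (P_ Psi' (Astar (b - A Xh)))) ->
  fnorm (Pperp Psi' (X0 - Xh)) <= 24%:R / 100%:R * fnorm (X0 - Xh) + 213%:R / 100%:R * vnorm nu.
Proof.
move=> r1 hO hadj [d [d0 d1 rip _]] rX0 hb rXh [u' o' sz'] hmax.
have [hO1 _] := hO.
set D := X0 - Xh.
pose dr := complex.Re d.
have dE : d = dr%:C%C := ge0_RE d d0.
have dr0 : 0 <= dr by exact: Re_ge0.
have dr1 : dr <= 4%:R / 100%:R.
  by move: d1; rewrite dE cst_C lecR.
have rD : (mxrank D <= 2 * r)%N.
  have hN : (mxrank (- Xh) <= r)%N.
    by rewrite -scaleN1r; apply: leq_trans (mxrank_scale _ _) rXh.
  apply: leq_trans (mxrank_add _ _) _.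
  by rewrite mul2n -addnn leq_add.
have [F [F1 FE]] := rank_decomp D.
have [Psi0 [u0 o0 sz0 mem0]] := atoms_decomp hO _ _ F1.
rewrite -FE in mem0.
have sz0' : (size Psi0 <= 2 * r)%N := leq_trans sz0 rD.
set T := Psi' ++ Psi0.
have sub' : (<<Psi'>> <= <<T>>)%VS by apply: sub_span => w wi; rewrite mem_cat wi.
have sub0 : (<<Psi0>> <= <<T>>)%VS by apply: sub_span => w wi; rewrite mem_cat wi orbT.
have rT : forall W, W \in <<T>>%VS -> (mxrank W <= 4 * r)%N.
  move=> W hW; apply: leq_trans (rank_span _ _ _ hW) _.
    by move=> w; rewrite mem_cat => /orP [/o'|/o0] /hO1 [].
  have -> : (4 * r = 2 * r + 2 * r)%N by rewrite -mulnDl.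
  by rewrite size_cat leq_add.
have HT : forall X, X \in <<T>>%VS ->
    (1 - dr) * nr X <= nr (A X) /\ nr (A X) <= (1 + dr) * nr X.
  by move=> X hX; exact: (ripR _ _ _ _ dE rip X (rT X hX)).
have hadjR : forall X y, ip (A X) y = ip X (Astar y).
  by move=> X y; rewrite /ip -vdot_mdot hadj.
have hY : b - A Xh = A D + nu by rewrite hb /D linearB /= addrAC.
set Y := Astar (b - A Xh).
have [Zin Zo] := projP T Y.
have [P1in P1o] := projP Psi' Y.
have [P0in P0o] := projP Psi0 Y.
have [Qin Qo] := projP Psi' D.
have hm : nr (P_ Psi0 Y) <= nr (P_ Psi' Y).
  have := hmax Psi0 (And3 u0 o0 sz0'); rewrite !fnormE lecR ler_sqrt //.
  exact: nr_ge0.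
rewrite /Pperp.
set Z := P_ T Y. set P1 := P_ Psi' Y. set P0 := P_ Psi0 Y. set Q := P_ Psi' D.
have DT : D \in <<T>>%VS := subvP sub0 _ mem0.
set E := Z - D.
have ET : E \in <<T>>%VS := memvB Zin DT.
have ha : nr E = ip (A E) (A D) + ip (A E) nu - ip E D.
  have h0 := orth_ip (Zo E ET); rewrite ipBl in h0.
  have -> : nr E = ip Z E - ip D E by rewrite /nr {1}/E ipBl.
  have -> : ip Z E = ip Y E by apply/eqP; rewrite eq_sym -subr_eq0; apply/eqP.
  by rewrite (ipC E Y) /Y -hadjR hY ipDr (ipC E D).
have hb' := @pol R m n p A <<T>>%VS dr dr0 HT D E DT ET.
rewrite (ipC (A E) (A D)) (ipC E D) in hb'.
have hc := CSs (A E) nu.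
have hd := (HT E ET).2.
have he : nr Z = nr P1 + nr (Z - P1).
  have := nrD (Z - P1) P1; rewrite subrK (orth_sub _ _ _ _ sub' P1in).
  move=> ->; rewrite mulr0 addr0 addrC //.
have hf : nr Z = nr P0 + nr (Z - P0).
  have := nrD (Z - P0) P0; rewrite subrK (orth_sub _ _ _ _ sub0 P0in).
  move=> ->; rewrite mulr0 addr0 addrC //.
have hg : nr E = nr (Z - P0) + nr (P0 - D).
  have := nrD (Z - P0) (P0 - D).
  rewrite (orth_sub _ _ _ _ sub0 (memvB P0in mem0)) mulr0 addr0.
  by rewrite addrA subrK.
have hh : nr (D - P1) = nr (D - Q) + nr (Q - P1).
  have := nrD (D - Q) (Q - P1).
  rewrite (orth_ip (Qo _ (memvB Qin P1in))) mulr0 addr0.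
  by rewrite addrA subrK.
have hi : nr (D - P1) = nr (Z - P1) + nr E - 2 * ip (Z - P1) E.
  have -> : D - P1 = (Z - P1) - E by rewrite /E [in RHS]opprB [in RHS]addrC [in RHS]addrA subrK.
  by rewrite nrB.
have hi2 := CSs (Z - P1) (- E).
rewrite ipNr nrN in hi2.
rewrite !fnormE /vnorm vdot_mdot mdot_nr sqrtC_R ?nr_ge0 // !cst_C.
rewrite -!rmorphM -rmorphD lecR.
exact: (@final_arith R dr (Num.sqrt (nr D)) (Num.sqrt (nr E)) (Num.sqrt (nr nu))
  (Num.sqrt (nr (A E))) (Num.sqrt (nr (Z - P1))) (Num.sqrt (nr (D - Q)))
  (nr E) (nr (A E)) (nr (Z - P1)) (nr (D - Q)) (ip (A E) (A D)) (ip (A E) nu)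
  (ip E D) (nr Z) (nr P1) (nr P0) (nr (Z - P0)) (nr (P0 - D)) (nr (D - P1))
  (nr (Q - P1)) (ip (Z - P1) E) dr0 dr1 (sqrtr_ge0 _) (sqrtr_ge0 _)
  (sqrtr_ge0 _) (sqrtr_ge0 _) (sqrtr_ge0 _) (sqrtr_ge0 _) (sqrE _) (sqrE _)
  (sqrE _) (sqrE _) ha hb' hc hd he hf hg (nr_ge0 _) hh (nr_ge0 _) hi hi2 hm).
Qed.
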